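(* Let $D\ge1$, let $Q_D$ be the $D$-dimensional hypercube on $X=\{0,1\}^D$ with adjacency matrix $A$. Fix $x\in X$ and let $B$ be a symmetric $A$-like matrix such that $B_{xy}=0$ for all $y\in X$. Then $B=0$.
   Context: $Q_D$ is the graph with vertex set $X=\{0,1\}^D$, two vertices adjacent iff they differ in exactly one coordinate. Matrices are real with rows and columns indexed by $X$. A matrix $B$ is $A$-like if $BA=AB$ and $B_{xy}=0$ for all $x,y\in X$ that are neither equal nor adjacent. *)

(* Defs.v *)
From mathcomp Require Import all_boot all_order all_algebra.
From mathcomp Require Import reals.
Set Implicit Arguments. Unset Strict Implicit. Unset Printing Implicit Defensive.
Import Order.TTheory GRing.Theory Num.Theory.
Local Open Scope ring_scope.

Definition cube (D : nat) := {ffun 'I_D -> bool}.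

Definition hdist (D : nat) (x y : cube D) : nat := #|[set i | x i != y i]|.

Definition adj (D : nat) (x y : cube D) : bool := hdist x y == 1%N.

Definition cmx (R : realType) (D : nat) := 'M[R]_#|cube D|.

Definition ent (R : realType) (D : nat) (B : cmx R D) (x y : cube D) : R :=
  B (enum_rank x) (enum_rank y).

Definition adjmx (R : realType) (D : nat) : cmx R D :=
  \matrix_(i, j) (adj (enum_val i) (enum_val j))%:R.

Definition A_like (R : realType) (D : nat) (B : cmx R D) : Prop :=
  B *m adjmx R D = adjmx R D *m B /\
  forall x y : cube D, x != y -> ~~ adj x y -> ent B x y = 0.

(* Main.v *)
Require Import Defs.
From mathcomp Require Import all_boot all_order all_algebra.
From mathcomp Require Import reals.
Set Implicit Arguments. Unset Strict Implicit. Unset Printing Implicit Defensive.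
Import Order.TTheory GRing.Theory Num.Theory.
Local Open Scope ring_scope.

Definition flip (D : nat) (y : cube D) (i : 'I_D) : cube D :=
  [ffun k => if k == i then ~~ y k else y k].

Lemma flipE D (y : cube D) i k : flip y i k = if k == i then ~~ y k else y k.
Proof. by rewrite ffunE. Qed.

Lemma flipK D (y : cube D) i : flip (flip y i) i = y.
Proof. by apply/ffunP => k; rewrite !flipE; case: (k == i) => //; rewrite negbK. Qed.

Lemma flipC D (y : cube D) i j : flip (flip y i) j = flip (flip y j) i.
Proof. by apply/ffunP => k; rewrite !flipE; case: (k == i); case: (k == j). Qed.

Definition par D (y : cube D) := odd #|[set k | y k]|.

Lemma par_flip D (y : cube D) i : par (flip y i) = ~~ par y.
Proof.
rewrite /par (cardsD1 i [set k | y k]) (cardsD1 i [set k | flip y i k]).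
have -> : [set k | flip y i k] :\ i = [set k | y k] :\ i.
  by apply/setP => k; rewrite !inE flipE; case: (k == i).
rewrite !inE flipE eqxx; case: (y i) => /=; rewrite ?negbK //.
Qed.

Lemma adj_flip D (y : cube D) i : adj y (flip y i).
Proof.
rewrite /adj /hdist; apply/eqP.
have -> : [set k | y k != flip y i k] = [set i].
  by apply/setP => k; rewrite !inE flipE; case: (k == i); case: (y k).
by rewrite cards1.
Qed.

Lemma adjP D (y z : cube D) : adj y z -> exists i, z = flip y i.
Proof.
rewrite /adj /hdist => /cards1P [i hi]; exists i.
apply/ffunP => k; rewrite flipE.
move/setP: hi => /(_ k); rewrite !inE.
by case: (k == i); case: (y k); case: (z k).
Qed.

Lemma adj_par D (y z : cube D) : adj y z -> par z = ~~ par y.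
Proof. by move=> /adjP [i ->]; rewrite par_flip. Qed.

Lemma reach D (x : cube D) (P : cube D -> Prop) :
  P x -> (forall y i, P y -> P (flip y i)) -> forall y, P y.
Proof.
move=> Px Pf y.
move: {2}(hdist x y) (erefl (hdist x y)) => n.
elim: n y => [|n IH] y hn.
  have : [set k | x k != y k] == set0 by rewrite -cards_eq0 -hn.
  move=> /eqP h0; have -> : y = x; last by [].
  apply/ffunP => k; move/setP: h0 => /(_ k); rewrite !inE.
  by case: (x k); case: (y k).
have : [set k | x k != y k] != set0 by rewrite -card_gt0 -/(hdist x y) hn.
case/set0Pn => i; rewrite inE => hi.
have E : [set k | x k != flip y i k] = [set k | x k != y k] :\ i.
  apply/setP => k; rewrite !inE flipE.
  case: (k =P i) => [->|/eqP ne]; rewrite ?eqxx ?(negbTE ne) /=.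
    by move: hi; case: (x i); case: (y i).
  by [].
rewrite -(flipK y i); apply: Pf; apply: IH.
move: hn; rewrite /hdist (cardsD1 i) inE hi add1n => -[<-].
by rewrite E.
Qed.

Lemma nadj_par D (y z : cube D) : par y = par z -> ~~ adj y z.
Proof. by move=> h; apply/negP => /adj_par; rewrite h; case: (par z). Qed.

Lemma sum_cube (R : realType) D (F : 'I_#|cube D| -> R) :
  \sum_k F k = \sum_(z : cube D) F (enum_rank z).
Proof. by rewrite (reindex _ (onW_bij _ (@enum_rank_bij (cube D)))). Qed.

Lemma entBA (R : realType) D (B : cmx R D) u v :
  (B *m adjmx R D) (enum_rank u) (enum_rank v) =
  \sum_(z : cube D) ent B u z * (adj z v)%:R.
Proof. by rewrite mxE sum_cube; apply: eq_bigr => z _; rewrite /ent mxE !enum_rankK. Qed.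

Lemma entAB (R : realType) D (B : cmx R D) u v :
  (adjmx R D *m B) (enum_rank u) (enum_rank v) =
  \sum_(z : cube D) (adj u z)%:R * ent B z v.
Proof. by rewrite mxE sum_cube; apply: eq_bigr => z _; rewrite /ent mxE !enum_rankK. Qed.

Lemma sum1 (R : realType) D (F : cube D -> R) p :
  (forall z, z != p -> F z = 0) -> \sum_z F z = F p.
Proof. by move=> h; rewrite (bigD1 p) //= big1 ?addr0. Qed.

Lemma sum2 (R : realType) D (F : cube D -> R) p q : p != q ->
  (forall z, z != p -> z != q -> F z = 0) -> \sum_z F z = F p + F q.
Proof.
move=> npq h; rewrite (bigD1 p) //= (bigD1 q) /=; last by rewrite eq_sym.
by rewrite big1 ?addr0 // => z /andP[zp zq]; apply: h.
Qed.

Lemma common_nb D (u z : cube D) i j : i != j ->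
  adj u z -> adj z (flip (flip u i) j) -> z = flip u i \/ z = flip u j.
Proof.
move=> nij /adjP [k ->] /adjP [l E].
case: (k =P i) => [->|/eqP nki]; first by left.
case: (k =P j) => [->|/eqP nkj]; first by right.
exfalso.
case: (k =P l) => [ekl|/eqP nkl].
  rewrite -ekl flipK in E.
  move/ffunP: E => /(_ i); rewrite !flipE eqxx (negbTE nij).
  by case: (u i).
move/ffunP: E => /(_ k); rewrite !flipE eqxx (negbTE nki) (negbTE nkj) (negbTE nkl).
by case: (u k).
Qed.

Lemma L1 (R : realType) D (B : cmx R D) (hlike : A_like B) u i :
  ent B u u = ent B (flip u i) (flip u i).
Proof.
have := congr1 (fun M : cmx R D => M (enum_rank u) (enum_rank (flip u i))) hlike.1.
rewrite /= entBA entAB (@sum1 _ _ _ u); last first.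
  move=> z hz; case hz2: (adj u z).
    have : ~~ adj z (flip u i).
      by apply: nadj_par; rewrite par_flip (adj_par hz2).
    by move/negbTE => ->; rewrite mulr0.
  by rewrite hlike.2 ?mul0r // ?hz2 // eq_sym.
rewrite (@sum1 _ _ _ (flip u i)); last first.
  move=> z hz; case hz2: (adj z (flip u i)).
    have : ~~ adj u z.
      by apply: nadj_par; move: (adj_par hz2); rewrite par_flip; case: (par u); case: (par z).
    by move/negbTE => ->; rewrite mul0r.
  by rewrite hlike.2 ?mulr0 // ?hz2.
by rewrite adj_flip mulr1 mul1r.
Qed.

Lemma L2 (R : realType) D (B : cmx R D) (hlike : A_like B) u i j : i != j ->
  ent B u (flip u i) + ent B u (flip u j) =
  ent B (flip u i) (flip (flip u i) j) + ent B (flip u j) (flip (flip u i) j).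
Proof.
move=> nij; set v := flip (flip u i) j.
have pv : par v = par u by rewrite /v !par_flip negbK.
have nuv : ~~ adj u v by apply: nadj_par.
have npq : flip u i != flip u j.
  apply/eqP => /ffunP /(_ i); rewrite !flipE eqxx (negbTE nij).
  by case: (u i).
have apv : adj (flip u i) v by exact: adj_flip.
have aqv : adj (flip u j) v by rewrite /v flipC; exact: adj_flip.
have cn : forall z, z != flip u i -> z != flip u j -> ~~ (adj u z && adj z v).
  move=> z h1 h2; apply/negP => /andP [a1 a2].
  by case: (common_nb nij a1 a2) => e; [move/eqP: h1 | move/eqP: h2].
have := congr1 (fun M : cmx R D => M (enum_rank u) (enum_rank v)) hlike.1.
rewrite /= entBA entAB (@sum2 _ _ _ (flip u i) (flip u j)) //; last first.
  move=> z h1 h2; case hzv: (adj z v); last by rewrite mulr0.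
  have nuz : ~~ adj u z by move: (cn z h1 h2); rewrite hzv andbT.
  have zu : u != z by apply/eqP => e; move: hzv nuv; rewrite -e => ->.
  by rewrite hlike.2 ?mul0r.
rewrite (@sum2 _ _ _ (flip u i) (flip u j)) //; last first.
  move=> z h1 h2; case huz: (adj u z); last by rewrite mul0r.
  have nzv : ~~ adj z v by move: (cn z h1 h2); rewrite huz.
  have zv : z != v by apply/eqP => e; move: huz nuv; rewrite e => ->.
  by rewrite hlike.2 ?mulr0.
by rewrite apv aqv !adj_flip !mulr1 !mul1r.
Qed.

Theorem lemma8p3 (R : realType) (D : nat) (hD : (1 <= D)%N) (x : cube D)
  (B : cmx R D) (hsym : B^T = B) (hlike : A_like B)
  (hx : forall y : cube D, ent B x y = 0) :
  B = 0.
Proof.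
have sym u v : ent B u v = ent B v u by rewrite /ent -{1}hsym mxE.
have diag : forall y, ent B y y = 0.
  apply: (@reach _ x) => [|y i h]; first exact: hx.
  by rewrite -(L1 hlike).
have edge : forall i y, ent B y (flip y i) = 0.
  move=> i; apply: (@reach _ x) => [|y j h]; first exact: hx.
  case: (j =P i) => [->|/eqP nji]; first by rewrite flipK sym.
  have nij : i != j by rewrite eq_sym.
  have e1 := L2 hlike y nij.
  have e2 := L2 hlike (flip y i) nij.
  rewrite flipK in e2.
  have s1 := sym (flip y i) y.
  have s2 := sym (flip (flip y i) j) (flip y j).
  rewrite -(flipC y i j).
  move: e1 e2; rewrite s1 s2 h add0r => -> e2.
  set d := ent B (flip y j) (flip (flip y i) j) in e2 *.
  have : d *+ 2 = 0.
    rewrite mulr2n; apply: (addrI (ent B (flip y i) (flip (flip y i) j))).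
    by rewrite addr0 addrA -e2 add0r.
  by move/eqP; rewrite mulrn_eq0 /= => /eqP.
apply/matrixP => a b; rewrite mxE.
have -> : B a b = ent B (enum_val a) (enum_val b) by rewrite /ent !enum_valK.
case: (enum_val a =P enum_val b) => [<-|/eqP neq]; first exact: diag.
case hadj: (adj (enum_val a) (enum_val b)).
  by case/adjP: hadj => i ->; exact: edge.
by rewrite hlike.2 ?hadj.
Qed.
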